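(* Let $n$ be a positive odd integer and let $G$ be a finite group. Then $\mathrm{Pow}(G)\cong \mathrm{Pow}(Q_8\times\mathbb{Z}_n)$ if and only if $G\cong Q_8\times\mathbb{Z}_n$.
   Context: All groups are finite. $Q_8$ is the quaternion group of order $8$ and $\mathbb{Z}_n$ the cyclic group of order $n$. For a group $X$, the power graph $\mathrm{Pow}(X)$ is the simple graph with vertex set $X$ in which two distinct vertices $x,y$ are adjacent if and only if $y\in\langle x\rangle$ or $x\in\langle y\rangle$. *)

(* Defs.v *)
From mathcomp Require Import all_boot all_algebra all_fingroup all_solvable.
Set Implicit Arguments. Unset Strict Implicit. Unset Printing Implicit Defensive.
Local Open Scope group_scope.

Definition pow_adj (gT : finGroupType) (x y : gT) : bool :=
  (x != y) && ((y \in <[x]>) || (x \in <[y]>)).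

Definition pow_graph_isom (gT hT : finGroupType) (G : {set gT}) (H : {set hT}) : Prop :=
  exists f : gT -> hT,
    [/\ {in G &, injective f}, f @: G = H &
        {in G &, forall x y, pow_adj (f x) (f y) = pow_adj x y}].

(* Q_8 x Z_n as a subgroup of the external product type 'Q_8 * 'Z_n;
   for n > 0, Zp n is the cyclic group of order n. *)
Definition Q8xZ (n : nat) : {set ('Q_8 * 'Z_n)%type} := setX 'Q_8 (Zp n).

(* Main.v *)
Require Import Defs.
From mathcomp Require Import all_boot all_algebra all_fingroup all_solvable.
From mathcomp Require Import zify.
Set Implicit Arguments. Unset Strict Implicit. Unset Printing Implicit Defensive.
Local Open Scope group_scope.

Definition QAx (qT : finGroupType) (Q : {set qT}) (zq q1 q2 q3 : qT) :=
  [/\ [/\ #|Q| = 8, zq \in Q, zq != 1 & zq ^+ 2 = 1],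
      (forall q, q \in Q -> q ^+ 2 = 1 -> q = 1 \/ q = zq),
      (forall q, q \in Q -> q ^+ 2 != 1 -> #[q] = 4),
      [/\ [/\ q1 \in Q, q2 \in Q & q3 \in Q], [/\ #[q1] = 4, #[q2] = 4 & #[q3] = 4],
          [/\ q1 \notin <[q2]>, q1 \notin <[q3]> & q2 \notin <[q3]>] &
          [/\ q2 \notin <[q1]>, q3 \notin <[q1]> & q3 \notin <[q2]>]] &
      (forall q, q \in Q -> [|| q \in <[q1]>, q \in <[q2]> | q \in <[q3]>])].

Lemma cyc_sym4 (gT : finGroupType) (a b : gT) : #[a] = #[b] -> a \in <[b]> -> b \in <[a]>.
Proof.
move=> oab ab; have sab : <[a]> \subset <[b]> by rewrite cycle_subG.
have -> : <[a]> = <[b]>.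
  by apply/eqP; rewrite eqEcard sab -!orderE oab leqnn.
exact: cycle_id.
Qed.

Lemma Q8_ax : exists zq q1 q2 q3, @QAx _ 'Q_8 zq q1 q2 q3.
Proof.
have n3 : 2 < 3 by [].
have isoQ : [set: 'Q_8]%G \isog [set: 'Q_(2 ^ 3)] by rewrite isog_refl.
have [[x y] genG [oy y2 xy]] := generators_quaternion n3 isoQ.
have [[defpp oGX _] _ [_ _ uniq _ _] [_ maxG] _] := quaternion_structure n3 genG isoQ.
have [oG Gx ox GXy] := genG.
have [pG _ _ _ _] := extremal_generators_facts (isT : prime 2) genG.
have {}ox : #[x] = 4 by rewrite ox.
have [Gy Xy] := setDP GXy.
set G := [set: 'Q_8]%G in oG Gx GXy uniq maxG pG oGX Gy *.
have x4 : x ^+ 4 = 1 by apply/eqP; rewrite -order_dvdn ox.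
have z2 : (x ^+ 2) ^+ 2 = 1 by rewrite -expgM.
have zn1 : x ^+ 2 != 1.
  by apply/eqP => /eqP; rewrite -order_dvdn ox.
have ord2 : forall q, q \in G -> q ^+ 2 = 1 -> q = 1 \/ q = x ^+ 2.
  move=> q Gq /eqP; rewrite -order_dvdn => d2.
  have : 0 < #[q] by [].
  have [oq|oq] : #[q] = 1%N \/ #[q] = 2 by move: #[q] d2 => [|[|[|k]]] //; auto.
    by left; apply/eqP; rewrite -order_eq1 oq.
  by right; apply: uniq.
have ord4 : forall q, q \in G -> q ^+ 2 != 1 -> #[q] = 4.
  move=> q Gq q2; case Xq: (q \in <[x]>); last first.
    by apply: oGX; rewrite inE Xq Gq.
  have d4 : #[q] %| 4 by rewrite -{2}ox order_dvdG.
  have := dvdn_leq (isT : 0 < 4) d4.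
  have : ~~ (#[q] %| 2) by rewrite order_dvdn.
  by move: #[q] d4 => [|[|[|[|[|k]]]]].
have Gxy : x * y \in G by rewrite groupM.
have Xxy : x * y \notin <[x]>.
  by apply: contra Xy => Xxy; rewrite -(mulKg x y) groupM ?groupV ?cycle_id.
have oxy : #[x * y] = 4 by apply: oGX; rewrite inE Xxy Gxy.
have maxC : forall (M : {group 'Q_8}) t, maximal M G -> t \in M -> #[t] = 4 -> M :=: <[t]>.
  move=> M t maxM Mt ot; have iM := p_maximal_index pG maxM.
  have oM : #|M| = 4.
    have := Lagrange (subsetT M); rewrite -/G oG iM => h.
    by apply/eqP; rewrite -(eqn_pmul2r (isT : 0 < 2)) h.
  apply/eqP; rewrite eq_sym eqEcard cycle_subG Mt oM -orderE ot leqnn //.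
exists (x ^+ 2), x, y, (x * y); split.
- split; [by move: oG | by rewrite inE | done | done].
- exact: ord2.
- exact: ord4.
- split.
  + by split.
  + by split.
  + split.
    * by apply: contra Xy => h; apply: cyc_sym4 h; rewrite ox oy.
    * by apply: contra Xxy => h; apply: cyc_sym4 h; rewrite ox oxy.
    * apply: contra Xy => h; apply: cyc_sym4; first by rewrite ox oy.
      have h' : x * y \in <[y]> by apply: cyc_sym4 h; rewrite oy oxy.
      by rewrite -(mulgK y x) groupM ?groupV ?cycle_id.
  + split => //.
    apply: contra Xy => h; apply: cyc_sym4; first by rewrite ox oy.
    by rewrite -(mulgK y x) groupM ?groupV ?cycle_id.
- move=> q Gq; case Xq: (q \in <[x]>) => //=.
  have oq : #[q] = 4 by apply: oGX; rewrite inE Xq Gq.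
  have [eqG|[M maxM sqM]] := maximal_exists (subsetT <[q]>).
    by move: oG; rewrite /G /= -eqG -orderE oq.
  have qM : q \in M by rewrite -cycle_subG.
  move: (maxM); rewrite maxG => /or3P[/eqP eM|/eqP eM|/eqP eM].
  + by rewrite eM in qM; rewrite qM in Xq.
  + have yM : y \in M by rewrite eM mem_gen // class_refl.
    by rewrite -(maxC M y maxM yM oy) qM.
  + have yM : x * y \in M by rewrite eM mem_gen // class_refl.
    by rewrite -(maxC M _ maxM yM oxy) qM orbT.
Qed.


Lemma nt_u3 k d s1 s2 : 0 < k -> d %| k -> prime s1 -> prime s2 -> s1 != s2 ->
  s1 %| k -> s2 %| k -> (forall e, e %| k -> (e %| d) || (d %| e)) ->
  d = 1%N \/ d = k.
Proof.
move=> k0 dk p1 p2 n12 d1 d2 hyp.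
case kd: (k %| d); first by right; apply/eqP; rewrite eqn_dvd kd dk.
have : ~~ all (fun r : nat => k`_r %| d) (primes k).
  apply: contraFN kd => /allP h; apply/(dvdn_partP _ k0) => r; exact: h.
rewrite -has_predC => /hasP[r rk /= nr].
have rp : prime r by move: rk; rewrite mem_primes => /andP[].
have dr : d %| k`_r by have := hyp _ (dvdn_part r k); rewrite (negPf nr).
have rd : r.-nat d := pnat_dvd dr (part_pnat r k).
have [s sp [sk sr]] : exists2 s, prime s & s %| k /\ s != r.
  case: (eqVneq s1 r) => [e1|ne]; last by exists s1.
  by exists s2 => //; split => //; rewrite -e1 eq_sym.
have sin : s \in primes k by rewrite mem_primes sp k0.
have := hyp _ (dvdn_part s k) => /orP[sd|ds].
  have ss : s %| k`_s by rewrite p_part dvdn_exp // logn_gt0.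
  have := pnat_dvd (dvdn_trans ss sd) rd.
  by rewrite pnatE // inE (negPf sr).
left; apply: (@pnat_1 r) => //.
apply: sub_in_pnat (pnat_dvd ds (part_pnat s k)) => x _.
by rewrite !inE => /eqP ->.
Qed.
Lemma nt_lattice a b c : 0 < a -> 0 < b -> 0 < c ->
  a %| lcmn b c -> gcdn a c %| b -> a %| b.
Proof.
move=> a0 b0 c0 h1 h2; apply/(dvdn_partP _ a0) => p pa.
have pp : prime p by move: pa; rewrite mem_primes => /andP[].
rewrite p_part pfactor_dvdn //.
have l1 := dvdn_leq_log p (_ : 0 < lcmn b c) h1.
have l2 := dvdn_leq_log p b0 h2.
move: l1 l2; rewrite logn_lcm // logn_gcd // ?lcmn_gt0 ?b0 ?c0 //.
lia.
Qed.

Section Cmp.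
Variable gT : finGroupType.
Implicit Types (x y v w m : gT).

Definition cmp x y := (y \in <[x]>) || (x \in <[y]>).
Definition nb (G : {set gT}) x := [set v in G | cmp x v].
Definition tw (G : {set gT}) x := [set v in G | nb G v == nb G x].
Definition clique (S : {set gT}) := {in S &, forall u v, cmp u v}.

Lemma cmpC x y : cmp x y = cmp y x.
Proof. by rewrite /cmp orbC. Qed.
Lemma cmpxx x : cmp x x.
Proof. by rewrite /cmp cycle_id. Qed.
Lemma cmp_cyc x y : cmp x y = (<[y]> \subset <[x]>) || (<[x]> \subset <[y]>).
Proof. by rewrite /cmp !cycle_subG. Qed.
Lemma cmp_eqcyc x x' y : <[x]> = <[x']> -> cmp x y = cmp x' y.
Proof. by rewrite !cmp_cyc => ->. Qed.
Lemma nb_eqcyc G x x' : <[x]> = <[x']> -> nb G x = nb G x'.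
Proof. by move=> e; apply/setP => v; rewrite !inE (cmp_eqcyc _ e). Qed.

Lemma cyc_sub_card (M : {group gT}) u w : cyclic M -> u \in M -> w \in M ->
  (<[u]> \subset <[w]>) = (#[u] %| #[w]).
Proof. by move=> cM uM wM; rewrite !orderE (cardSg_cyclic cM) ?cycle_subG. Qed.

Lemma elt_ord (a : gT) e : e %| #[a] -> exists2 v, v \in <[a]> & #[v] = e.
Proof.
move=> de; exists (a ^+ (#[a] %/ e)); first exact: mem_cycle.
have : <[a ^+ (#[a] %/ e)]>%G \in [set <[a ^+ (#[a] %/ e)]>%G] by rewrite set11.
by rewrite -cycle_sub_group // inE orderE => /andP[_ /eqP].
Qed.

Lemma exists_max (G : {group gT}) y : y \in G ->
  exists2 m, m \in G & y \in <[m]> /\ nb G m = <[m]>.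
Proof.
move=> Gy; pose P := [pred v | (v \in G) && (y \in <[v]>)].
have Py : P y by rewrite /P /= Gy cycle_id.
case: (arg_maxnP (fun v => #[v]) Py) => m /andP[Gm ym] maxm.
exists m => //; split => //; apply/setP => v; rewrite inE.
have sMG : <[m]> \subset G by rewrite cycle_subG.
apply/andP/idP => [[Gv /orP[//|mv]]|vm]; last first.
  by split; [apply: (subsetP sMG) | rewrite /cmp vm].
have smv : <[m]> \subset <[v]> by rewrite cycle_subG.
have le := maxm v; rewrite /P /= Gv (subsetP smv) //= in le.
have -> : <[m]> = <[v]> by apply/eqP; rewrite eqEcard smv -!orderE le.
exact: cycle_id.
Qed.

Lemma cyc_all_cmp m y s1 s2 : y \in <[m]> -> (forall v, v \in <[m]> -> cmp y v) ->
  prime s1 -> prime s2 -> s1 != s2 -> s1 %| #[m] -> s2 %| #[m] ->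
  y = 1 \/ <[y]> = <[m]>.
Proof.
move=> ym hyp p1 p2 n12 d1 d2.
have cM : cyclic <[m]> := cycle_cyclic m.
have [oy|oy] : #[y] = 1%N \/ #[y] = #[m].
  apply: (nt_u3 (order_gt0 m) (order_dvdG ym) p1 p2 n12 d1 d2).
  move=> e dm; have [v vm ov] := elt_ord dm.
  by have := hyp v vm; rewrite cmp_cyc (cyc_sub_card cM vm ym) (cyc_sub_card cM ym vm) ov.
- by left; apply/eqP; rewrite -order_eq1 oy.
- by right; apply/eqP; rewrite eqEcard cycle_subG ym -!orderE oy leqnn.
Qed.


Lemma cyc_pclique m (p : nat) : p.-nat #[m] -> clique <[m]>.
Proof.
move=> pm u v um vm; have cM : cyclic <[m]> := cycle_cyclic m.
have [a oa] := p_natP (pnat_dvd (order_dvdG um) pm).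
have [b ob] := p_natP (pnat_dvd (order_dvdG vm) pm).
rewrite cmp_cyc (cyc_sub_card cM vm um) (cyc_sub_card cM um vm) oa ob.
by case: (leqP a b) => ab; rewrite ?(dvdn_exp2l _ ab) ?(dvdn_exp2l _ (ltnW ab)) ?orbT.
Qed.

Lemma cyc_three (M : {group gT}) t1 t2 t3 : cyclic M ->
  t1 \in M -> t2 \in M -> t3 \in M -> ~~ cmp t1 t2 ->
  (forall v, v \in M -> cmp t2 v -> cmp t3 v -> cmp t1 v) ->
  (forall v, v \in M -> cmp t1 v -> cmp t3 v -> cmp t2 v) -> False.
Proof.
move=> cM M1 M2 M3 n12 h1 h2.
have [a defM] := cyclicP cM.
have sub u w : u \in M -> w \in M -> (<[u]> \subset <[w]>) = (#[u] %| #[w]).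
  exact: cyc_sub_card.
have oM u : u \in M -> #[u] %| #[a] by rewrite defM; apply: order_dvdG.
have md u w : u \in M -> w \in M -> #[u] %| #[w] -> u \in <[w]>.
  by move=> uM wM d; rewrite -cycle_subG sub.
have dL : lcmn #[t2] #[t3] %| #[a] by rewrite dvdn_lcm !oM.
have [vL vLa oL] := elt_ord dL.
have MvL : vL \in M by rewrite defM.
have c1L : cmp t1 vL.
  apply: h1 => //.
    by apply/orP; right; apply: md => //; rewrite oL dvdn_lcml.
  by apply/orP; right; apply: md => //; rewrite oL dvdn_lcmr.
have d1L : #[t1] %| lcmn #[t2] #[t3].
  move: c1L; rewrite cmp_cyc !sub // oL => /orP[] // h.
  case/negP: n12; apply/orP; left; apply: md => //.
  by rewrite (dvdn_trans (dvdn_lcml _ _) h).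
have dG : gcdn #[t1] #[t3] %| #[a] by rewrite (dvdn_trans (dvdn_gcdl _ _)) ?oM.
have [vG vGa oG] := elt_ord dG.
have MvG : vG \in M by rewrite defM.
have c2G : cmp t2 vG.
  apply: h2 => //.
    by apply/orP; left; apply: md => //; rewrite oG dvdn_gcdl.
  by apply/orP; left; apply: md => //; rewrite oG dvdn_gcdr.
have d2G : gcdn #[t1] #[t3] %| #[t2].
  move: c2G; rewrite cmp_cyc !sub // oG => /orP[] // h.
  case/negP: n12; apply/orP; left; apply: md => //.
  by rewrite (dvdn_trans h (dvdn_gcdl _ _)).
case/negP: n12; apply/orP; right; apply: md => //.
by rewrite (nt_lattice _ _ _ d1L d2G).
Qed.

End Cmp.

Section Transfer.
Variables (gT hT : finGroupType) (G : {group gT}) (H : {set hT}) (f : gT -> hT).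
Hypotheses (injf : {in G &, injective f}) (imf : f @: G = H)
  (adjf : {in G &, forall x y, pow_adj (f x) (f y) = pow_adj x y}).

Lemma cmpf : {in G &, forall x y, cmp (f x) (f y) = cmp x y}.
Proof.
move=> x y Gx Gy; case: (eqVneq x y) => [->|ne]; first by rewrite !cmpxx.
by have := adjf Gx Gy; rewrite /pow_adj ne (inj_in_eq injf) // ne.
Qed.

Lemma fGH x : x \in G -> f x \in H.
Proof. by rewrite -imf; apply: imset_f. Qed.

Lemma fonto w : w \in H -> exists2 v, v \in G & w = f v.
Proof. by rewrite -imf => /imsetP. Qed.

Lemma nbf x v : x \in G -> v \in G -> (f v \in nb H (f x)) = (v \in nb G x).
Proof. by move=> Gx Gv; rewrite !inE fGH // Gv cmpf. Qed.

Lemma nb_img x : x \in G -> f @: nb G x = nb H (f x).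
Proof.
move=> Gx; apply/setP => w; apply/imsetP/idP => [[v vN ->]|wN].
  have Gv : v \in G by move: vN; rewrite inE => /andP[].
  by rewrite nbf.
have [v Gv ew] : exists2 v, v \in G & w = f v.
  by apply: fonto; move: wN; rewrite inE => /andP[].
by exists v => //; rewrite -nbf // -ew.
Qed.

Lemma card_nbf x : x \in G -> #|nb G x| = #|nb H (f x)|.
Proof.
move=> Gx; rewrite -nb_img // card_in_imset //.
by move=> u v; rewrite !inE => /andP[Gu _] /andP[Gv _]; apply: injf.
Qed.

Lemma nb_eqf x x' : x \in G -> x' \in G ->
  (nb G x == nb G x') = (nb H (f x) == nb H (f x')).
Proof.
move=> Gx Gx'; apply/eqP/eqP => [e|e]; first by rewrite -!nb_img // e.
apply/setP => v; case Gv : (v \in G); last by rewrite !inE Gv.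
by rewrite -!nbf // e.
Qed.

Lemma tw_img x : x \in G -> f @: tw G x = tw H (f x).
Proof.
move=> Gx; apply/setP => w; apply/imsetP/idP => [[v vN ->]|wN].
  move: vN; rewrite !inE => /andP[Gv e].
  by rewrite fGH // -nb_eqf.
have [v Gv ew] : exists2 v, v \in G & w = f v.
  by apply: fonto; move: wN; rewrite inE => /andP[].
by exists v => //; move: wN; rewrite !inE ew Gv nb_eqf // => /andP[].
Qed.

Lemma card_twf x : x \in G -> #|tw G x| = #|tw H (f x)|.
Proof.
move=> Gx; rewrite -tw_img // card_in_imset //.
by move=> u v; rewrite !inE => /andP[Gu _] /andP[Gv _]; apply: injf.
Qed.

Lemma cliquef x : x \in G -> clique (nb G x) -> clique (nb H (f x)).
Proof.
move=> Gx cl; rewrite -nb_img // => _ _ /imsetP[u uN ->] /imsetP[v vN ->].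
have Gu : u \in G by move: uN; rewrite inE => /andP[].
have Gv : v \in G by move: vN; rewrite inE => /andP[].
by rewrite cmpf // cl.
Qed.

End Transfer.


Lemma expg_pair (qT kT : finGroupType) (a : qT) (b : kT) k :
  (a, b) ^+ k = (a ^+ k, b ^+ k).
Proof. by elim: k => // k IH; rewrite !expgS IH. Qed.

Lemma cyc_pair (qT kT : finGroupType) (a : qT) (b : kT) w :
  coprime #[a] #[b] -> (w \in <[(a, b)]>) = (w.1 \in <[a]>) && (w.2 \in <[b]>).
Proof.
move=> co; case: w => w1 w2 /=.
apply/cycleP/andP => [[k e]|[/cycleP[i ->] /cycleP[j ->]]].
  by move: e; rewrite expg_pair => -[-> ->]; split; apply: mem_cycle.
exists (chinese #[a] #[b] i j); rewrite expg_pair.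
congr (_, _).
  by rewrite -(expg_mod_order a (chinese _ _ _ _)) chinese_modl // expg_mod_order.
by rewrite -(expg_mod_order b (chinese _ _ _ _)) chinese_modr // expg_mod_order.
Qed.

Section HSide.
Variables (qT kT : finGroupType) (Q : {group qT}) (K : {group kT}).
Variables (zq q1 q2 q3 : qT) (g : kT) (n : nat).
Hypotheses (QA : QAx Q zq q1 q2 q3) (defK : K :=: <[g]>) (og : #[g] = n)
  (oddn : odd n).
Local Notation H := (setX Q K).

Lemma cardK : #|K| = n. Proof. by rewrite defK -orderE. Qed.
Lemma cardH : #|H| = (8 * n)%N.
Proof. by case: QA => [[oQ _ _ _] _ _ _ _]; rewrite cardsX oQ cardK. Qed.

Lemma coH w : w \in H -> coprime #[w.1] #[w.2].
Proof.
case: QA => [[oQ _ _ _] _ _ _ _]; rewrite inE => /andP[Q1 K2].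
have d1 : #[w.1] %| 8 by rewrite -oQ order_dvdG.
have d2 : #[w.2] %| n by rewrite -cardK order_dvdG.
by rewrite (coprime_dvdl d1) // (coprime_dvdr d2) // -[8]/(2 ^ 3)%N coprime_pexpl // coprime2n.
Qed.

Lemma cycH w v : w \in H -> (v \in <[w]>) = (v.1 \in <[w.1]>) && (v.2 \in <[w.2]>).
Proof. by move=> Hw; move: (coH Hw); case: w {Hw} => a b /= co; rewrite cyc_pair. Qed.


Lemma Qord4 q : q \in Q -> q ^+ 2 != 1 -> #[q] = 4.
Proof. by case: QA => _ _ h _ _; apply: h. Qed.
Lemma Qinv q : q \in Q -> q ^+ 2 = 1 -> q = 1 \/ q = zq.
Proof. by case: QA => _ h _ _ _; apply: h. Qed.
Lemma zq_ne1 : zq != 1. Proof. by case: QA => [[]]. Qed.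
Lemma sq_ne1 (T : finGroupType) (q : T) : #[q] = 4 -> q ^+ 2 != 1.
Proof. by rewrite -order_dvdn => ->. Qed.
Lemma Qsq q : q \in Q -> q ^+ 2 != 1 -> q ^+ 2 = zq.
Proof.
move=> Qq hq2; have oq := Qord4 Qq hq2.
have : (q ^+ 2) ^+ 2 = 1 by rewrite -expgM; apply/eqP; rewrite -order_dvdn oq.
by case/Qinv; rewrite ?groupX // => e; rewrite e eqxx in hq2.
Qed.
Lemma QcycS q r : r \in Q -> q \in <[r]> -> q \in Q.
Proof. by move=> Qr; apply/subsetP; rewrite cycle_subG. Qed.
Lemma Qsub q r : r \in Q -> q \in <[r]> -> q ^+ 2 != 1 -> <[q]> = <[r]>.
Proof.
move=> Qr qr hq2; have Qq := QcycS Qr qr; have oq := Qord4 Qq hq2.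
have r2 : r ^+ 2 != 1.
  apply: contra hq2 => /eqP r2; case/cycleP: qr => i ->.
  by rewrite -expgM mulnC expgM r2 expg1n.
by apply/eqP; rewrite eqEcard cycle_subG qr -!orderE oq (Qord4 Qr r2).
Qed.
Lemma Qzq r : r \in Q -> #[r] = 4 -> zq \in <[r]>.
Proof. by move=> Qr or; rewrite -(Qsq Qr (sq_ne1 or)) mem_cycle. Qed.
Lemma Qsq1 q r : q \in Q -> q ^+ 2 = 1 -> r \in Q -> #[r] = 4 -> q \in <[r]>.
Proof. by move=> Qq hq2 Qr or; case: (Qinv Qq hq2) => ->; rewrite ?group1 ?Qzq. Qed.
Lemma Qother q : q \in Q -> q ^+ 2 != 1 ->
  exists2 r, r \in Q /\ #[r] = 4 & r \notin <[q]> /\ q \notin <[r]>.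
Proof.
move=> Qq hq2; case: QA => _ _ _ [[Q1 Q2 Q3] [o1 o2 o3] [n12 n13 n23] [n21 n31 n32]] U.
have key r s : r \in Q -> s \in Q -> #[s] = 4 -> q \in <[r]> -> s \notin <[r]> -> r \notin <[s]> ->
    s \notin <[q]> /\ q \notin <[s]>.
  move=> Qr Qs os qr sr rs; have eqq := Qsub Qr qr hq2; rewrite eqq; split => //.
  by apply: contra rs => qs; rewrite -(Qsub Qs qs hq2) eqq cycle_id.
case/or3P: (U q Qq) => qi.
- apply: (@ex_intro2 _ _ _ q2); first by split.
  by apply: (key q1).
- apply: (@ex_intro2 _ _ _ q3); first by split.
  by apply: (key q2).
- apply: (@ex_intro2 _ _ _ q1); first by split.
  by apply: (key q3).
Qed.

Definition Yf y := [&& y \in H, #[y.1] == 4 & <[y.2]> == K].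

Lemma cycHS y : y \in H -> <[y]> \subset H.
Proof. by move=> Hy; rewrite cycle_subG. Qed.

Lemma upH y x w : Yf y -> x \in <[y]> -> x.1 ^+ 2 != 1 -> w \in H ->
  x \in <[w]> -> w \in <[y]>.
Proof.
case/and3P=> Hy _ /eqP y2K xy x2 Hw xw.
move: (xy) (xw); rewrite !cycH // => /andP[x1y _] /andP[x1w _].
have Qy1 : y.1 \in Q by move: Hy; rewrite inE => /andP[].
move: (Hw); rewrite inE => /andP[Qw1 Kw2].
rewrite y2K Kw2 andbT -(Qsub Qy1 x1y x2) (Qsub Qw1 x1w x2) cycle_id //.
Qed.

Lemma nbY y : Yf y -> nb H y = <[y]>.
Proof.
move=> Yy; have Hy : y \in H by case/and3P: Yy.
have y2 : y.1 ^+ 2 != 1 by case/and3P: Yy => _ /eqP /sq_ne1.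
apply/setP => w; rewrite inE; apply/andP/idP => [[Hw /orP[//|yw]]|wy].
  exact: (upH Yy (cycle_id y)).
by split; [apply: (subsetP (cycHS Hy)) | rewrite /cmp wy].
Qed.

Lemma nbsub y x : Yf y -> x \in <[y]> -> x.1 ^+ 2 != 1 -> nb H x \subset <[y]>.
Proof.
move=> Yy xy x2; apply/subsetP => w; rewrite inE => /andP[Hw /orP[wx|xw]].
  by apply: (subsetP _ _ wx); rewrite cycle_subG.
exact: (upH Yy xy x2 Hw xw).
Qed.

Lemma nbYY y x : Yf y -> Yf x -> x \in <[y]> -> nb H x = nb H y.
Proof.
move=> Yy Yx xy; rewrite !nbY //.
have Hy : y \in H by case/and3P: Yy.
have x2 : x.1 ^+ 2 != 1 by case/and3P: Yx => _ /eqP /sq_ne1.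
have yx : y \in <[x]> := upH Yx (cycle_id x) x2 Hy xy.
by apply/eqP; rewrite eqEsubset !cycle_subG xy yx.
Qed.

Lemma YfQ r : r \in Q -> #[r] = 4 -> Yf (r, g).
Proof.
move=> Qr or; rewrite /Yf inE /= Qr defK cycle_id or !eqxx //.
Qed.

Lemma F5 x r : x \in H -> x.1 ^+ 2 = 1 -> r \in Q -> #[r] = 4 -> x \in <[(r, g)]>.
Proof.
move=> Hx x2 Qr or; have Hr : (r, g) \in H by case/and3P: (YfQ Qr or).
rewrite cycH //= Qsq1 //; last by move: Hx; rewrite inE => /andP[].
by move: Hx; rewrite inE defK => /andP[].
Qed.

Lemma F6 r s : r \in Q -> #[r] = 4 -> s \in Q -> #[s] = 4 ->
  r \notin <[s]> -> s \notin <[r]> -> ~~ cmp (r, g) (s, g).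
Proof.
move=> Qr or Qs os rs sr.
have Hr : (r, g) \in H by case/and3P: (YfQ Qr or).
have Hs : (s, g) \in H by case/and3P: (YfQ Qs os).
by rewrite /cmp !cycH //= (negPf rs) (negPf sr).
Qed.

Lemma F7 r s t w : r \in Q -> #[r] = 4 -> s \in Q -> #[s] = 4 -> t \in Q -> #[t] = 4 ->
  s \notin <[r]> -> w \in H -> cmp (r, g) w -> cmp (s, g) w -> cmp (t, g) w.
Proof.
move=> Qr or Qs os Qt ot sr Hw.
have Hr : (r, g) \in H by case/and3P: (YfQ Qr or).
have Hs : (s, g) \in H by case/and3P: (YfQ Qs os).
move=> c1 c2.
have w1 : w \in <[(r, g)]> by rewrite -nbY ?YfQ // inE Hw c1.
have w2 : w \in <[(s, g)]> by rewrite -nbY ?YfQ // inE Hw c2.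
move: w1 w2; rewrite !cycH //= => /andP[wr _] /andP[ws _].
have Qw1 : w.1 \in Q by move: Hw; rewrite inE => /andP[].
case: (eqVneq (w.1 ^+ 2) 1) => [e|ne].
  by rewrite /cmp F5 ?orbT.
case/negP: sr; rewrite -(Qsub Qr wr ne) (Qsub Qs ws ne) cycle_id //.
Qed.

Lemma F8 w : w \in H -> [|| w \in <[(q1, g)]>, w \in <[(q2, g)]> | w \in <[(q3, g)]>].
Proof.
case: QA => _ _ _ [[Q1 Q2 Q3] [o1 o2 o3] _ _] U Hw.
have H1 : (q1, g) \in H by case/and3P: (YfQ Q1 o1).
have H2 : (q2, g) \in H by case/and3P: (YfQ Q2 o2).
have H3 : (q3, g) \in H by case/and3P: (YfQ Q3 o3).
move: (Hw); rewrite inE => /andP[Qw1 Kw2].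
rewrite !cycH //= -defK Kw2 !andbT; exact: U.
Qed.

Lemma Qgen (a b : qT) : a \in <[b]> -> #[b] = 4 -> a ^+ 2 != 1 -> a = b \/ a = b^-1.
Proof.
case/cycleP=> i -> ob; rewrite -(expg_mod_order b i) ob.
have : i %% 4 < 4 by rewrite ltn_pmod.
have b4 : b ^+ 4 = 1 by rewrite -ob expg_order.
move: (i %% 4) => [|[|[|[|k]]]] // _ h.
- by rewrite expg0 expg1n eqxx in h.
- by left; rewrite expg1.
- by rewrite -expgM b4 eqxx in h.
- by right; rewrite invg_expg ob.
Qed.

Lemma cliqueH y x : Yf y -> x \in <[y]> -> x.1 ^+ 2 != 1 -> <[x.2]> != K ->
  clique (nb H x) -> #|tw H x| <= 2 /\ 5 <= #|nb H x|.
Proof.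
move=> Yy xy x2 x2K cl.
have Hy : y \in H by case/and3P: Yy.
have Hx : x \in H by apply: (subsetP (cycHS Hy)).
have [Qx1 Kx2] : x.1 \in Q /\ x.2 \in K by move: Hx; rewrite inE => /andP[].
have ox1 := Qord4 Qx1 x2.
have e2 : x.2 = 1.
  case: (eqVneq x.2 1) => // ne; exfalso.
  have Ha : (1 : qT, x.2) \in H by rewrite inE /= group1 Kx2.
  have Hb : (x.1 ^+ 2, 1 : kT) \in H by rewrite inE /= groupX ?group1.
  have ax : (1 : qT, x.2) \in nb H x by rewrite inE Ha /cmp cycH //= group1 cycle_id.
  have bx : (x.1 ^+ 2, 1 : kT) \in nb H x.
    by rewrite inE Hb /cmp cycH //= mem_cycle group1.
  have := cl _ _ ax bx; rewrite /cmp !cycH //= !cycle1 !inE.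
  by rewrite (negPf x2) (negPf ne) !andbF.
have n1 : 1 < n.
  have n0 : n != 0 by apply: contraTneq oddn => ->.
  rewrite ltn_neqAle lt0n n0 andbT; apply: contra x2K => /eqP n1.
  have K1 : K :=: 1 by apply/card1_trivg; rewrite cardK -n1.
  by rewrite e2 cycle1 K1.
have n3 : 3 <= n by move: n1 oddn; case: n => [|[|[|k]]].
split.
  have sub : tw H x \subset [set x; (x.1^-1, 1 : kT)].
    apply/subsetP => v; rewrite inE => /andP[Hv /eqP e].
    have [Qv1 Kv2] : v.1 \in Q /\ v.2 \in K by move: Hv; rewrite inE => /andP[].
    have vx : v \in nb H x by rewrite -e inE Hv cmpxx.
    have ev2 : v.2 = 1.
      case: (eqVneq v.2 1) => // ne; exfalso.
      have Hc : (1 : qT, v.2) \in H by rewrite inE /= group1 Kv2.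
      have : (1 : qT, v.2) \in nb H v by rewrite inE Hc /cmp cycH //= group1 cycle_id.
      rewrite e inE Hc /cmp !cycH //= e2 !cycle1 !inE (negPf ne) /=.
      by rewrite andbF /= group1 andbT => /eqP x11; rewrite x11 expg1n eqxx in x2.
    have v2 : v.1 ^+ 2 != 1.
      apply/negP => /eqP v21.
      have [r [Qr or] [rx xr]] := Qother Qx1 x2.
      have Hw : (r, 1 : kT) \in H by rewrite inE /= Qr group1.
      have : (r, 1 : kT) \in nb H v.
        by rewrite inE Hw /cmp !cycH //= (Qsq1 Qv1 v21 Qr or) ev2 cycle_id !orbT.
      rewrite e inE Hw /cmp !cycH //= (negPf rx) (negPf xr) //.
    have v1x : v.1 \in <[x.1]>.
      move: vx; rewrite inE Hv /cmp !cycH //= => /orP[/andP[//] | /andP[xv _]].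
      by rewrite (Qsub Qv1 xv x2) cycle_id.
    rewrite !inE; case: (Qgen v1x ox1 v2) => ev1.
      by apply/orP; left; apply/eqP; case: v ev1 ev2 {Hv e Qv1 Kv2 vx v2 v1x} => a b /= -> ->; case: x e2 {xy x2 x2K cl Hx Qx1 Kx2 ox1} => ? ? /= ->.
    by apply/orP; right; apply/eqP; case: v ev1 ev2 {Hv e Qv1 Kv2 vx v2 v1x} => a b /= -> ->.
  by apply: leq_trans (subset_leq_card sub) _; rewrite cards2; case: (_ != _).
pose A := setX [set x.1] K.
pose B := [set 1; (x.1 ^+ 2, 1 : kT)].
have sA : A \subset nb H x.
  apply/subsetP => w wA.
  have [/eqP w1 Kw2] : w.1 == x.1 /\ w.2 \in K by move: wA; rewrite !inE => /andP[].
  have Hw : w \in H by rewrite inE w1 Qx1 Kw2.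
  by rewrite inE Hw /cmp (cycH _ Hw) w1 cycle_id e2 group1 orbT.
have sB : B \subset nb H x.
  apply/subsetP => w wB.
  have : (w == 1) || (w == (x.1 ^+ 2, 1 : kT)) by move: wB; rewrite !inE.
  case/orP=> /eqP ->.
    by rewrite inE group1 /cmp group1.
  have Hb : (x.1 ^+ 2, 1 : kT) \in H by rewrite inE /= groupX ?group1.
  by rewrite inE Hb /cmp (cycH _ Hx) /= mem_cycle group1.
have AB : A :&: B = set0.
  apply/setP => w; rewrite !inE; apply/negP => /andP[/andP[/eqP w1 _] /orP[/eqP ew|/eqP ew]].
    by move: w1; rewrite ew /= => x11; rewrite -x11 expg1n eqxx in x2.
  move: w1; rewrite ew /= expgS expg1 => /(canRL (mulKg _)); rewrite mulVg => x11.
  by rewrite x11 expg1n eqxx in x2.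
have cA : #|A| = n by rewrite cardsX cards1 cardK mul1n.
have cB : #|B| = 2.
  have nb1 : (1 : qT * kT) != (x.1 ^+ 2, 1 : kT).
    apply/eqP => e; have := congr1 fst e; rewrite /= => e1.
    by rewrite -e1 eqxx in x2.
  by rewrite cards2 nb1.
have := cardsUI A B; rewrite AB cards0 addn0 cA cB => cU.
have sU : A :|: B \subset nb H x by rewrite subUset sA sB.
have := subset_leq_card sU; rewrite cU => le.
by rewrite (leq_trans _ le) // -[5]/(3 + 2)%N leq_add2r.
Qed.

Section Main.
Variables (gT : finGroupType) (G : {group gT}) (f : gT -> qT * kT).
Hypotheses (injf : {in G &, injective f}) (imf : f @: G = H)
  (adjf : {in G &, forall x y, pow_adj (f x) (f y) = pow_adj x y}).

Lemma tot_small (p k : nat) : prime p -> 5 <= (p ^ k)%N -> 2 < totient (p ^ k)%N.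
Proof.
move=> pp pk; have p2 := prime_gt1 pp.
case: k pk => [|k] pk; first by [].
rewrite totient_pfactor //=; move: pk; rewrite expnS.
have : 0 < (p ^ k)%N by rewrite expn_gt0 ltnW.
move: (p ^ k)%N => a a0 pa.
rewrite ltnNge; apply/negP => le.
nia.
Qed.

Lemma anchor y yb : Yf y -> yb \in G -> f yb = y -> exists2 m, m \in G & nb G yb = <[m]>.
Proof.
move=> Yy Gyb fyb.
have [m Gm [ym nbm]] := exists_max Gyb.
have Hy : y \in H by case/and3P: Yy.
have sMG : <[m]> \subset G by rewrite cycle_subG.
have Hx : f m \in H := fGH imf Gm.
have xy : f m \in <[y]>.
  rewrite -nbY // -fyb (nbf injf imf adjf) // inE Gm /cmp ym orbT //.
case: (eqVneq ((f m).1 ^+ 2) 1) => [xZ | x2].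
  exfalso; case: QA => _ _ _ [[Q1 Q2 Q3] [o1 o2 o3] [n12 n13 n23] [n21 n31 n32]] _.
  have pre r : r \in Q -> #[r] = 4 -> exists2 t, t \in <[m]> & f t = (r, g).
    move=> Qr or; have Hr : (r, g) \in H by case/and3P: (YfQ Qr or).
    have [t Gt ft] := fonto imf Hr; exists t; last by rewrite ft.
    by rewrite -nbm -(nbf injf imf adjf) // -ft inE Hr /cmp (F5 Hx xZ Qr or) orbT.
  have [t1 M1 f1] := pre _ Q1 o1.
  have [t2 M2 f2] := pre _ Q2 o2.
  have [t3 M3 f3] := pre _ Q3 o3.
  have G1 : t1 \in G := subsetP sMG _ M1.
  have G2 : t2 \in G := subsetP sMG _ M2.
  have G3 : t3 \in G := subsetP sMG _ M3.
  apply: (@cyc_three _ <[m]>%G t1 t2 t3 (cycle_cyclic m) M1 M2 M3).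
  - by rewrite -(cmpf injf adjf) // f1 f2 F6.
  - move=> v Mv; have Gv := subsetP sMG _ Mv.
    rewrite -!(cmpf injf adjf) // f1 f2 f3.
    exact: (F7 Q2 o2 Q3 o3 Q1 o1 n32 (fGH imf Gv)).
  - move=> v Mv; have Gv := subsetP sMG _ Mv.
    rewrite -!(cmpf injf adjf) // f1 f2 f3.
    exact: (F7 Q1 o1 Q3 o3 Q2 o2 n31 (fGH imf Gv)).
have [Qx1 Kx2] : (f m).1 \in Q /\ (f m).2 \in K by move: Hx; rewrite inE => /andP[].
have ox1 := Qord4 Qx1 x2.
case: (eqVneq <[(f m).2]> K) => [x2K | x2K].
  have Yx : Yf (f m) by rewrite /Yf Hx ox1 x2K !eqxx.
  exists m => //; rewrite -nbm; apply/eqP.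
  by rewrite (nb_eqf injf imf adjf) // fyb (nbYY Yy Yx xy).
have sub : {subset <[m]> <= nb G yb}.
  move=> v Mv; have Gv := subsetP sMG _ Mv.
  rewrite -(nbf injf imf adjf) // fyb nbY //.
  apply: (subsetP (nbsub Yy xy x2)).
  by rewrite (nbf injf imf adjf) // nbm.
have [pm | npm] := boolP ((pdiv #[m]).-nat #[m]).
  exfalso.
  have clM : clique (nb G m) by rewrite nbm; exact: cyc_pclique pm.
  have [tw2 nb5] := cliqueH Yy xy x2 x2K (cliquef injf imf adjf Gm clM).
  have om5 : 5 <= #[m] by rewrite orderE -nbm (card_nbf injf imf adjf).
  have gsub : [set z | generator <[m]> z] \subset tw G m.
    apply/subsetP => z; rewrite inE /generator => /eqP ez.
    have Gz : z \in G by rewrite (subsetP sMG) // ez cycle_id.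
    by rewrite inE Gz (nb_eqcyc _ ez) eqxx.
  have := subset_leq_card gsub; rewrite -totient_gen (card_twf injf imf adjf Gm) => h.
  have pp : prime (pdiv #[m]) by apply: pdiv_prime; apply: leq_trans om5.
  move: pm om5 h pp; set p := pdiv #[m] => pm.
  have [k ->] := p_natP pm => om5 h pp.
  by have := tot_small pp om5; rewrite ltnNge (leq_trans h tw2).
have m1 : 1 < #[m].
  case: (ltnP 1 #[m]) => // le1.
  have om : #[m] = 1%N by apply/eqP; rewrite eqn_leq le1 order_gt0.
  by rewrite om in npm.
have [s2 ps2 ns2] : exists2 s, s \in primes #[m] & s != pdiv #[m].
  move: npm; rewrite /pnat order_gt0 /= => /allPn[s sm ns].
  by exists s => //; move: ns; rewrite inE.
have cmpall : forall v, v \in <[m]> -> cmp yb v.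
  by move=> v /sub; rewrite inE => /andP[].
have p2 : prime s2 by move: ps2; rewrite mem_primes => /andP[].
have d2 : s2 %| #[m] by move: ps2; rewrite mem_primes => /and3P[].
case: (cyc_all_cmp ym cmpall (pdiv_prime m1) p2 _ (pdiv_dvd _) d2).
- by rewrite eq_sym.
- move=> yb1; exfalso.
  have Qy1 : y.1 \in Q by move: Hy; rewrite inE => /andP[].
  have y2 : y.1 ^+ 2 != 1 by case/and3P: Yy => _ /eqP /sq_ne1.
  have [r [Qr or] [ry yr]] := Qother Qy1 y2.
  have Hw : (r, 1 : kT) \in H by rewrite inE /= Qr group1.
  have [v Gv fv] := fonto imf Hw.
  have : v \in nb G yb.
    by rewrite inE Gv yb1 /cmp /= group1 orbT.
  rewrite -(nbf injf imf adjf) // fyb -fv nbY // cycH //= (negPf ry) //.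
- by move=> e; exists m => //; rewrite (nb_eqcyc _ e) nbm.
Qed.

End Main.

End HSide.


Section GT.
Variables (gT : finGroupType) (G : {group gT}) (n : nat) (a b c : gT).
Hypotheses (oddn : odd n) (oG : #|G| = (8 * n)%N)
  (Ga : a \in G) (Gb : b \in G) (Gc : c \in G)
  (oa : #[a] = (4 * n)%N) (ob : #[b] = (4 * n)%N) (oc : #[c] = (4 * n)%N)
  (cov : forall x, x \in G -> [|| x \in <[a]>, x \in <[b]> | x \in <[c]>]).

Lemma n_gt0 : 0 < n. Proof. by case: n oddn. Qed.

Lemma sq_in x y : x \in G -> y \in G -> #[x] = (4 * n)%N -> #[y] = (4 * n)%N ->
  x ^+ 2 \in <[y]>.
Proof.
move=> Gx Gy ox oy.
have n0 := n_gt0.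
set d := #|<[x]> :&: <[y]>|.
have le : #|<[x]> * <[y]>| <= (8 * n)%N.
  by rewrite -oG subset_leq_card // mul_subG // cycle_subG.
have eq := mul_cardG <[x]> <[y]>; rewrite -!orderE ox oy in eq.
have dd : d %| (4 * n)%N by rewrite -ox orderE cardSg // subsetIl.
have d2 : (2 * n)%N %| d.
  case/dvdnP: dd => e de.
  have : (4 * n * (4 * n) <= 8 * n * d)%N by rewrite eq leq_mul2r le orbT.
  move: de; case: e => [|[|[|e]]] de; try nia.
  - move=> _; have -> : d = (2 * (2 * n))%N by lia.
    exact: dvdn_mull.
  - by move=> _; have -> : d = (2 * n)%N by lia.
have cX : cyclic <[x]> := cycle_cyclic x.
have s : <[x ^+ 2]> \subset <[x]> :&: <[y]>.
  rewrite -(cardSg_cyclic cX) ?cycle_subG ?mem_cycle ?subsetIl //.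
  by rewrite -orderE orderXdiv ox -/d ?dvdn_mulr // -[4]/(2 * 2)%N -mulnA mulKn.
by have := subsetP s (x ^+ 2) (cycle_id _); rewrite inE => /andP[].
Qed.

Lemma ord_dvd x : x \in G -> #[x] %| (4 * n)%N.
Proof.
move=> Gx; case/or3P: (cov Gx) => h.
- by rewrite -oa order_dvdG.
- by rewrite -ob order_dvdG.
- by rewrite -oc order_dvdG.
Qed.

Let z := a ^+ (2 * n).
Let k := a ^+ 4.

Lemma oz : #[z] = 2.
Proof.
have n0 := n_gt0.
rewrite /z orderXdiv oa; last by rewrite -[4]/(2 * 2)%N -mulnA dvdn_mull.
by rewrite -[4]/(2 * 2)%N -mulnA mulnK // muln_gt0.
Qed.

Lemma ok : #[k] = n.
Proof.
have n0 := n_gt0.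
by rewrite /k orderXdiv oa ?dvdn_mulr // mulKn.
Qed.

Lemma zk_in x : x \in G -> #[x] = (4 * n)%N -> z \in <[x]> /\ k \in <[x]>.
Proof.
move=> Gx ox; have a2 := sq_in Ga Gx oa ox.
split; first by rewrite /z expgM groupX.
by rewrite /k -[4]/(2 * 2)%N expgM groupX.
Qed.

Lemma inv_in x t : t \in <[x]> -> z \in <[x]> -> #[t] = 2 -> t = z.
Proof.
move=> tx zx ot; have cX := cycle_cyclic x.
have tz : t \in <[z]>.
  by rewrite -cycle_subG -(cardSg_cyclic cX) ?cycle_subG // -!orderE ot oz.
move: ot; case/cycleP: tz => i ->; rewrite -(expg_mod_order z i) oz.
have : i %% 2 < 2 by rewrite ltn_pmod.
by case: (i %% 2) => [|[|j]] // _; rewrite ?expg0 ?order1 ?expg1.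
Qed.

Lemma inv_uniq t : t \in G -> #[t] = 2 -> t = z.
Proof.
move=> Gt ot; case/or3P: (cov Gt) => h; apply: (inv_in h) => //.
- exact: (zk_in Ga oa).1.
- exact: (zk_in Gb ob).1.
- exact: (zk_in Gc oc).1.
Qed.

Lemma centK : G \subset 'C(<[k]>).
Proof.
apply/subsetP => x Gx; rewrite cent_cycle; apply/cent1P.
have cyc y : x \in <[y]> -> k \in <[y]> -> commute x k.
  by move=> xy ky; apply: (centsP (cycle_abelian y)).
case/or3P: (cov Gx) => h; apply: (cyc _ h).
- exact: (zk_in Ga oa).2.
- exact: (zk_in Gb ob).2.
- exact: (zk_in Gc oc).2.
Qed.

Lemma GT_iso : G \isog setX [set: 'Q_8] (Zp n).
Proof.
have n0 := n_gt0.
have [P sylP] := Sylow_exists 2 G.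
have pP : 2.-group P := pHall_pgroup sylP.
have sPG : P \subset G := pHall_sub sylP.
have oP : #|P| = 8.
  rewrite (card_Hall sylP) oG partnM // (@part_p'nat 2 n) ?muln1.
    by rewrite -[8]/(2 ^ 3)%N p_part pfactorK.
  by rewrite p'natE // dvdn2 oddn.
have d2P : 2 %| #|P| by rewrite oP.
have [t Pt ot] := Cauchy (isT : prime 2) d2P.
have zP : z \in P by rewrite -(inv_uniq (subsetP sPG _ Pt) ot).
have Ohm1 : #|'Ohm_1(P)| = 2.
  rewrite (OhmE 1 pP).
  have -> : <<'Ldiv_(2 ^ 1)(P)>> = <[z]>.
    apply/eqP; rewrite eqEsubset gen_subG; apply/andP; split.
      apply/subsetP => x; rewrite !inE => /andP[Px]; rewrite expn1 -order_dvdn => dx.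
      have : 0 < #[x] by [].
      have [o1|o2] : #[x] = 1%N \/ #[x] = 2 by move: #[x] dx => [|[|[|j]]] //; auto.
        by move: o1 => /eqP; rewrite order_eq1 => /eqP ->.
      by rewrite (inv_uniq (subsetP sPG _ Px) o2) cycle_id.
    by rewrite cycle_subG mem_gen // !inE zP /= expn1 -order_dvdn oz.
  by rewrite -orderE oz.
have ntP : P != 1 :> {set gT}.
  by apply/eqP => P1; move: oP; rewrite P1 cards1.
have isoQ : P \isog [set: 'Q_8].
  case/orP: (introT (prime_Ohm1P pP ntP) Ohm1) => [cP|/andP[_ /eqP/quaternion_classP]].
    exfalso; have [x defP] := cyclicP cP.
    have Gx : x \in G by rewrite (subsetP sPG) // defP cycle_id.
    have := ord_dvd Gx; rewrite orderE -defP oP.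
    rewrite -[8]/(4 * 2)%N dvdn_pmul2l // dvdn2 oddn //.
  case=> j j2 iso; have := card_isog iso; rewrite oP card_quaternion //.
  move/eqP; rewrite -[8]/(2 ^ 3)%N eqn_exp2l // => /eqP ej.
  by rewrite -ej in iso.
have cPK : <[k]> \subset 'C(P).
  by rewrite centsC (subset_trans sPG centK).
have oK : #|<[k]>| = n by rewrite -orderE ok.
have tiPK : P :&: <[k]> = 1.
  by apply: coprime_TIg; rewrite oP oK -[8]/(2 ^ 3)%N coprime_pexpl // coprime2n.
have dp : P \x <[k]> = G.
  rewrite dprodE //; apply/eqP; rewrite eqEcard mul_subG ?cycle_subG //=.
    by rewrite TI_cardMg // oP oK oG.
  by rewrite -[k]/(a ^+ 4) groupX.
apply: (isog_dprod dp (setX_dprod [set: 'Q_8]%G (Zp_group n))).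
  exact: isog_trans isoQ (isog_setX1 _ _).
apply: isog_trans (isog_set1X _ _).
have zi : forall m, #[k] = m -> Zp m \isog <[k]> by move=> m <-; apply: Zp_isog.
by rewrite isog_sym; apply: zi.
Qed.

End GT.


Theorem corollary5 (n : nat) (gT : finGroupType) (G : {group gT}) :
  0 < n -> odd n ->
  (pow_graph_isom G (Q8xZ n) <-> G \isog Q8xZ n).
Proof.
move=> n0 oddn; split.
- case=> f [injf imf adjf].
  have [zq [q1 [q2 [q3 QA]]]] := Q8_ax.
  have [g defK og] : exists2 g : 'Z_n, Zp n = <[g]> & #[g] = n.
    case: (ltnP 1 n) => n1.
      by exists Zp1; [rewrite /Zp n1; exact: Zp_cycle | rewrite order_Zp1 Zp_cast].
    have e1 : n = 1%N by apply/eqP; rewrite eqn_leq n1 n0.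
    by exists 1; [rewrite /Zp ltnNge n1 cycle1 | rewrite order1 e1].
  have imf' : f @: G = setX [set: 'Q_8]%G (Zp_group n) := imf.
  have defK' : Zp_group n :=: <[g]> := defK.
  have QA' : QAx [set: 'Q_8]%G zq q1 q2 q3 := QA.
  have step r : r \in [set: 'Q_8] -> #[r] = 4 -> exists2 m, m \in G &
      #[m] = (4 * n)%N /\ (forall x, x \in G -> f x \in <[(r, g)]> -> x \in <[m]>).
    move=> Qr or; have Y := YfQ defK' Qr or.
    have Hr : (r, g) \in setX [set: 'Q_8] (Zp n) by case/and3P: Y.
    have [yb Gyb fyb] := fonto imf' Hr.
    have [m Gm e] := anchor QA' defK' og oddn injf imf' adjf Y Gyb (esym fyb).
    exists m => //; split.
      rewrite orderE -e (card_nbf injf imf' adjf) // -fyb (nbY QA' defK' og oddn Y).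
      have -> : <[(r, g)]> = setX <[r]> <[g]>.
        by apply/setP => w; rewrite inE (cycH QA' defK' og oddn _ Hr).
      by rewrite cardsX -!orderE or og.
    move=> x Gx fx; rewrite -e -(nbf injf imf' adjf) // -fyb.
    by rewrite (nbY QA' defK' og oddn Y).
  case: QA => _ _ _ [[Q1 Q2 Q3] [o1 o2 o3] _ _] _.
  have [a Ga [oa ca]] := step _ Q1 o1.
  have [b Gb [ob cb]] := step _ Q2 o2.
  have [c Gc [oc cc]] := step _ Q3 o3.
  have oG : #|G| = (8 * n)%N.
    by rewrite -(card_in_imset injf) imf' (cardH QA' defK' og).
  rewrite /Q8xZ; apply: (GT_iso oddn oG Ga Gb Gc oa ob oc) => x Gx.
  have Hx : f x \in setX [set: 'Q_8] (Zp n) by rewrite -imf' imset_f.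
  case/or3P: (F8 QA' defK' og oddn Hx) => h.
  + by rewrite (ca _ Gx h).
  + by rewrite (cb _ Gx h) orbT.
  + by rewrite (cc _ Gx h) !orbT.
- case/isogP => phi injphi imphi.
  have injf : {in G &, injective phi} by apply/injmP.
  exists phi; split => //; first by rewrite -morphimEdom.
  have mem u v : u \in G -> v \in G -> (phi v \in <[phi u]>) = (v \in <[u]>).
    move=> Gu Gv; rewrite -morphim_cycle //; apply/idP/idP => [h|h]; last exact: mem_morphim.
    have sU : <[u]> \subset G by rewrite cycle_subG.
    by rewrite -(injmK injphi sU) mem_morphpre.
  move=> x y Gx Gy; rewrite /pow_adj (inj_in_eq injf) // !mem //.
Qed.
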